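(* For all integers $1\le m<n$ there exists a full-rank $A_1\in\mathbb R^{m\times n}$ such that for all $0<p,q<\infty$: $A_1^\dagger\in\mathrm{ginv}_{\mathrm{col}(p,q)}(A_1)$ if and only if $p=2$.
   Context: Generalized inverses are taken real: $\mathcal G(A)=\{X\in\mathbb R^{n\times m}:AX=I_m\}$, $\mathrm{ginv}_\nu(A)=\arg\min_{X\in\mathcal G(A)}\|X\|_\nu$ (a set). For $M$ with columns $m_j$, $\|M\|_{\mathrm{col}(p,q)}=(\sum_j\|m_j\|_p^q)^{1/q}$ (a quasi-norm when $p<1$ or $q<1$). $A^\dagger=A^\top(AA^\top)^{-1}$. *)

(* Defs.v *)
From Stdlib Require Import Reals Lra Lia.
Open Scope R_scope.

(* Matrices are functions nat -> nat -> R; only entries within the stated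
   dimensions are ever used. *)
Definition Mat := nat -> nat -> R.

Fixpoint rsum (n : nat) (f : nat -> R) : R :=
  match n with O => 0 | S k => rsum k f + f k end.

(* x^y for x >= 0, y > 0, with 0^y = 0 (Stdlib's Rpower gives Rpower 0 y = 1). *)
Definition rpow (x y : R) : R :=
  if Req_EM_T x 0 then 0 else Rpower x y.

Definition mmul (k : nat) (A B : Mat) : Mat :=
  fun i j => rsum k (fun l => A i l * B l j).

Definition transp (A : Mat) : Mat := fun i j => A j i.

Definition is_identity (m : nat) (M : Mat) : Prop :=
  forall i j, (i < m)%nat -> (j < m)%nat ->
    M i j = if Nat.eq_dec i j then 1 else 0.

Definition in_G (m n : nat) (A X : Mat) : Prop := is_identity m (mmul n A X).

Definition vnorm (n : nat) (p : R) (v : nat -> R) : R :=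
  rpow (rsum n (fun i => rpow (Rabs (v i)) p)) (1 / p).

Definition colnorm (n m : nat) (p q : R) (M : Mat) : R :=
  rpow (rsum m (fun j => rpow (vnorm n p (fun i => M i j)) q)) (1 / q).

Definition in_ginv_col (m n : nat) (p q : R) (A X : Mat) : Prop :=
  in_G m n A X /\
  forall Y, in_G m n A Y -> colnorm n m p q X <= colnorm n m p q Y.

Definition full_rank (m n : nat) (A : Mat) : Prop :=
  forall c : nat -> R,
    (forall j, (j < n)%nat -> rsum m (fun i => c i * A i j) = 0) ->
    forall i, (i < m)%nat -> c i = 0.

(* X = A^dagger = A^T (A A^T)^{-1}: Y is the (two-sided) inverse of A A^T
   and X = A^T Y (as n x m matrices). *)
Definition is_pinv (m n : nat) (A X : Mat) : Prop :=
  exists Y : Mat,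
    is_identity m (mmul m (mmul n A (transp A)) Y) /\
    is_identity m (mmul m Y (mmul n A (transp A))) /\
    forall i j, (i < n)%nat -> (j < m)%nat -> X i j = mmul m (transp A) Y i j.

(* Main.v *)
Require Import Defs.
From Stdlib Require Import Reals Lra Lia.
Open Scope R_scope.

Lemma rsum_ext n f g : (forall k, (k < n)%nat -> f k = g k) -> rsum n f = rsum n g.
Proof. induction n; intros H; simpl; auto. rewrite IHn, H; auto; intros; apply H; lia. Qed.

Lemma rsum_plus n f g : rsum n (fun k => f k + g k) = rsum n f + rsum n g.
Proof. induction n; simpl; [lra|rewrite IHn; lra]. Qed.

Lemma rsum_scal n c f : rsum n (fun k => c * f k) = c * rsum n f.
Proof. induction n; simpl; [lra|rewrite IHn; lra]. Qed.

Lemma rsum_zero n : rsum n (fun _ => 0) = 0.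
Proof. induction n; simpl; [lra|rewrite IHn; lra]. Qed.

Lemma rsum_delta_out n a u : (n <= a)%nat -> rsum n (fun k => if Nat.eqb k a then u else 0) = 0.
Proof. induction n; intros H; simpl; [lra|]. rewrite IHn by lia.
  destruct (Nat.eqb_spec n a); [lia|lra]. Qed.

Lemma rsum_delta n a u : (a < n)%nat -> rsum n (fun k => if Nat.eqb k a then u else 0) = u.
Proof. induction n; intros H; simpl; [lia|].
  destruct (Nat.eqb_spec n a).
  - subst. rewrite rsum_delta_out by lia. lra.
  - rewrite IHn by lia. lra. Qed.

Lemma rsum_le n f g : (forall k, (k < n)%nat -> f k <= g k) -> rsum n f <= rsum n g.
Proof. induction n; intros H; simpl; [lra|].
  assert (rsum n f <= rsum n g) by (apply IHn; intros; apply H; lia).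
  assert (f n <= g n) by (apply H; lia). lra. Qed.

Lemma rsum_lt n f g a : (a < n)%nat -> (forall k, (k < n)%nat -> f k <= g k) -> f a < g a ->
  rsum n f < rsum n g.
Proof. induction n; intros Ha H Hs; simpl; [lia|].
  destruct (Nat.eq_dec a n).
  - subst. assert (rsum n f <= rsum n g) by (apply rsum_le; intros; apply H; lia). lra.
  - assert (rsum n f < rsum n g) by (apply IHn; auto; try lia; intros; apply H; lia).
    assert (f n <= g n) by (apply H; lia). lra. Qed.

Lemma rsum_nonneg n f : (forall k, (k < n)%nat -> 0 <= f k) -> 0 <= rsum n f.
Proof. intros H. rewrite <- (rsum_zero n). apply rsum_le. auto. Qed.

Lemma rpow_nonneg x y : 0 <= rpow x y.
Proof. unfold rpow. destruct (Req_EM_T x 0); [lra|]. unfold Rpower. left; apply exp_pos. Qed.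

Lemma rpow_pos x y : 0 < x -> rpow x y = Rpower x y.
Proof. intros H. unfold rpow. destruct (Req_EM_T x 0); [lra|auto]. Qed.

Lemma rpow_0 y : rpow 0 y = 0.
Proof. unfold rpow. destruct (Req_EM_T 0 0); [auto|lra]. Qed.

Lemma rpow_lt x x' y : 0 <= x -> x < x' -> 0 < y -> rpow x y < rpow x' y.
Proof. intros H1 H2 H3. rewrite (rpow_pos x') by lra.
  destruct H1 as [H1|H1].
  - rewrite rpow_pos by lra. apply Rlt_Rpower_l; lra.
  - subst. rewrite rpow_0. unfold Rpower; apply exp_pos. Qed.

Lemma rpow_le x x' y : 0 <= x -> x <= x' -> 0 < y -> rpow x y <= rpow x' y.
Proof. intros H1 [H2|H2] H3. left; apply rpow_lt; auto. subst; lra. Qed.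

Lemma rpow_sq x : rpow (Rabs x) 2 = x * x.
Proof. destruct (Req_dec x 0).
  - subst. rewrite Rabs_R0, rpow_0. lra.
  - rewrite rpow_pos by (apply Rabs_pos_lt; auto).
    replace 2 with (INR 2) by (simpl; lra). rewrite Rpower_pow by (apply Rabs_pos_lt; auto).
    simpl. rewrite Rmult_1_r. rewrite <- Rabs_mult. apply Rabs_pos_eq. nra. Qed.

Lemma colnorm_le n m p q X Y : 0 < p -> 0 < q ->
  (forall j, (j < m)%nat -> rsum n (fun i => rpow (Rabs (X i j)) p) <= rsum n (fun i => rpow (Rabs (Y i j)) p)) ->
  colnorm n m p q X <= colnorm n m p q Y.
Proof. intros Hp Hq H. unfold colnorm, vnorm.
  apply rpow_le; [apply rsum_nonneg; intros; apply rpow_nonneg| |apply Rdiv_lt_0_compat; lra].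
  apply rsum_le. intros j Hj. apply rpow_le; [apply rpow_nonneg| |auto].
  apply rpow_le; [apply rsum_nonneg; intros; apply rpow_nonneg|auto|apply Rdiv_lt_0_compat; lra]. Qed.

Lemma colnorm_lt n m p q X Y a : 0 < p -> 0 < q -> (a < m)%nat ->
  (forall j, (j < m)%nat -> rsum n (fun i => rpow (Rabs (X i j)) p) <= rsum n (fun i => rpow (Rabs (Y i j)) p)) ->
  rsum n (fun i => rpow (Rabs (X i a)) p) < rsum n (fun i => rpow (Rabs (Y i a)) p) ->
  colnorm n m p q X < colnorm n m p q Y.
Proof. intros Hp Hq Ha H Hs. unfold colnorm, vnorm.
  apply rpow_lt; [apply rsum_nonneg; intros; apply rpow_nonneg| |apply Rdiv_lt_0_compat; lra].
  apply (rsum_lt _ _ _ a); auto.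
  - intros j Hj. apply rpow_le; [apply rpow_nonneg| |auto].
    apply rpow_le; [apply rsum_nonneg; intros; apply rpow_nonneg|auto|apply Rdiv_lt_0_compat; lra].
  - apply rpow_lt; [apply rpow_nonneg| |auto].
    apply rpow_lt; [apply rsum_nonneg; intros; apply rpow_nonneg|auto|apply Rdiv_lt_0_compat; lra]. Qed.

Lemma colnorm_ext n m p q X Y : 0 < p -> 0 < q ->
  (forall i j, (i < n)%nat -> (j < m)%nat -> X i j = Y i j) ->
  colnorm n m p q X = colnorm n m p q Y.
Proof. intros Hp Hq H. apply Rle_antisym; apply colnorm_le; auto; intros j Hj;
  right; apply rsum_ext; intros; rewrite H; auto. Qed.

Lemma in_G_ext m n A X Y : (forall i j, (i < n)%nat -> (j < m)%nat -> X i j = Y i j) ->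
  in_G m n A X -> in_G m n A Y.
Proof. unfold in_G, is_identity, mmul. intros H HX i j Hi Hj. rewrite <- HX by auto.
  apply rsum_ext. intros; rewrite H; auto. Qed.

Lemma lin_deriv a b : derivable_pt_lim (fun t => a + b * t) 0 b.
Proof. intros eps He. exists (mkposreal 1 Rlt_0_1). intros h Hh _.
  replace ((a + b * (0 + h) - (a + b * 0)) / h - b) with 0 by (field; auto).
  rewrite Rabs_R0; auto. Qed.

Lemma deriv_exists p : 0 < p -> p <> 2 -> exists t, -1/20 < t < 1/20 /\
  Rpower (1/5 + 2 * t) p + Rpower (2/5 + -1 * t) p < Rpower (1/5) p + Rpower (2/5) p.
Proof. intros Hp Hne.
  assert (H1 := derivable_pt_lim_comp _ _ _ _ _ (lin_deriv (1/5) 2)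
     (derivable_pt_lim_power (1/5 + 2 * 0) p ltac:(lra))).
  assert (H2 := derivable_pt_lim_comp _ _ _ _ _ (lin_deriv (2/5) (-1))
     (derivable_pt_lim_power (2/5 + -1 * 0) p ltac:(lra))).
  assert (Hd := derivable_pt_lim_plus _ _ _ _ _ H1 H2).
  replace (1/5 + 2 * 0) with (1/5) in Hd by ring.
  replace (2/5 + -1 * 0) with (2/5) in Hd by ring.
  set (l := p * Rpower (1 / 5) (p - 1) * 2 + p * Rpower (2 / 5) (p - 1) * -1) in Hd.
  assert (Hl : l <> 0).
  { unfold l. intros E.
    replace (2/5) with (2 * (1/5)) in E by field.
    rewrite <- Rpower_mult_distr in E by lra.
    assert (Hpos : 0 < Rpower (1/5) (p-1)) by (unfold Rpower; apply exp_pos).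
    assert (E2 : Rpower 2 (p-1) = 2).
    { apply (Rmult_eq_reg_l (p * Rpower (1/5) (p-1))); [|apply Rmult_integral_contrapositive; split; lra]. lra. }
    assert (E3 := f_equal ln E2). rewrite ln_Rpower in E3.
    assert (0 < ln 2) by (rewrite <- ln_1; apply ln_increasing; lra).
    apply Hne. apply (Rmult_eq_reg_r (ln 2)); lra. }
  destruct (Hd (Rabs l / 2)) as [d Hdd].
  { apply Rdiv_lt_0_compat; [apply Rabs_pos_lt; auto|lra]. }
  set (h0 := Rmin (d/2) (1/40)).
  assert (Hh0 : 0 < h0) by (apply Rmin_glb_lt; [destruct d; simpl; lra|lra]).
  assert (Hh1 : h0 <= d/2) by apply Rmin_l.
  assert (Hh2 : h0 <= 1/40) by apply Rmin_r.
  assert (Hdp : 0 < d) by (destruct d; auto).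
  destruct (Rlt_dec 0 l) as [Lp|Ln].
  - specialize (Hdd (- h0) ltac:(lra) ltac:(rewrite Rabs_Ropp, Rabs_pos_eq; lra)).
    rewrite (Rabs_pos_eq l) in Hdd by lra.
    exists (-h0). split; [lra|].
    unfold plus_fct, comp in Hdd.
    replace (0 + - h0) with (-h0) in Hdd by ring.
    replace (1/5 + 2*0) with (1/5) in Hdd by ring.
    replace (2/5 + -1*0) with (2/5) in Hdd by ring.
    set (Q := ((Rpower (1 / 5 + 2 * - h0) p + Rpower (2 / 5 + -1 * - h0) p -
          (Rpower (1 / 5) p + Rpower (2 / 5) p)) / - h0)) in Hdd.
    assert (HQ : 0 < Q) by (apply Rabs_def2 in Hdd; lra).
    assert (E : Rpower (1 / 5 + 2 * - h0) p + Rpower (2 / 5 + -1 * - h0) p -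
          (Rpower (1 / 5) p + Rpower (2 / 5) p) = Q * - h0) by (unfold Q; field; lra).
    nra.
  - assert (Ln' : l < 0) by (destruct (Rtotal_order l 0) as [?|[?|?]]; auto; lra).
    specialize (Hdd h0 ltac:(lra) ltac:(rewrite Rabs_pos_eq; lra)).
    rewrite (Rabs_left l) in Hdd by lra.
    exists h0. split; [lra|].
    unfold plus_fct, comp in Hdd.
    replace (0 + h0) with h0 in Hdd by ring.
    replace (1/5 + 2*0) with (1/5) in Hdd by ring.
    replace (2/5 + -1*0) with (2/5) in Hdd by ring.
    set (Q := ((Rpower (1 / 5 + 2 * h0) p + Rpower (2 / 5 + -1 * h0) p -
          (Rpower (1 / 5) p + Rpower (2 / 5) p)) / h0)) in Hdd.
    assert (HQ : Q < 0) by (apply Rabs_def2 in Hdd; lra).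
    assert (E : Rpower (1 / 5 + 2 * h0) p + Rpower (2 / 5 + -1 * h0) p -
          (Rpower (1 / 5) p + Rpower (2 / 5) p) = Q * h0) by (unfold Q; field; lra).
    nra.
Qed.

Ltac cases := repeat (match goal with |- context [Nat.eqb ?a ?b] => destruct (Nat.eqb_spec a b) end; try subst);
  try lia; try lra; try nra.

Definition Am (m : nat) : Mat := fun i k =>
  (if Nat.eqb k i then 1 else 0) + (if Nat.eqb i 0 then (if Nat.eqb k m then 2 else 0) else 0).
Definition Dd (i : nat) : R := if Nat.eqb i 0 then 5 else 1.
Definition X0 (m : nat) : Mat := fun k j => Am m j k / Dd j.

Lemma Dd_pos i : 0 < Dd i.
Proof. unfold Dd; cases. Qed.

Lemma AAT m n i j : (m < n)%nat -> (i < m)%nat -> (j < m)%nat ->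
  mmul n (Am m) (transp (Am m)) i j = if Nat.eqb i j then Dd i else 0.
Proof. intros Hmn Hi Hj. unfold mmul, transp.
  rewrite (rsum_ext _ _ (fun k => (if Nat.eqb k i then (if Nat.eqb i j then 1 else 0) else 0) +
     (if Nat.eqb k m then (if Nat.eqb i 0 then if Nat.eqb j 0 then 4 else 0 else 0) else 0))).
  - rewrite rsum_plus, rsum_delta, rsum_delta by lia. unfold Dd. cases.
  - intros k Hk. unfold Am. cases. Qed.

Lemma full_rank_Am m n : (m < n)%nat -> full_rank m n (Am m).
Proof. intros Hmn c H i Hi. specialize (H i ltac:(lia)).
  rewrite (rsum_ext _ _ (fun l => if Nat.eqb l i then c i else 0)) in H.
  - rewrite rsum_delta in H by lia. auto.
  - intros k Hk. unfold Am. cases. Qed.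

Definition Y0 : Mat := fun l j => if Nat.eqb l j then / Dd l else 0.

Lemma X0_pinv m n : (m < n)%nat -> is_pinv m n (Am m) (X0 m).
Proof. intros Hmn. exists Y0. split; [|split].
  - intros i j Hi Hj. unfold mmul at 1.
    rewrite (rsum_ext _ _ (fun l => if Nat.eqb l j then (if Nat.eqb i j then 1 else 0) else 0)).
    + rewrite rsum_delta by lia. destruct (Nat.eqb_spec i j), (Nat.eq_dec i j); lia || lra.
    + intros l Hl. rewrite AAT by lia. unfold Y0. assert (H := Dd_pos l).
      cases; field; lra.
  - intros i j Hi Hj. unfold mmul at 1.
    rewrite (rsum_ext _ _ (fun l => if Nat.eqb l i then (if Nat.eqb i j then 1 else 0) else 0)).
    + rewrite rsum_delta by lia. destruct (Nat.eqb_spec i j), (Nat.eq_dec i j); lia || lra.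
    + intros l Hl. rewrite AAT by lia. unfold Y0. assert (H := Dd_pos l).
      cases; field; lra.
  - intros i j Hi Hj. unfold mmul, transp.
    rewrite (rsum_ext _ _ (fun l => if Nat.eqb l j then Am m j i / Dd j else 0)).
    + rewrite rsum_delta by lia. reflexivity.
    + intros l Hl. unfold Y0. destruct (Nat.eqb_spec l j); [subst; unfold Rdiv; ring|ring]. Qed.

Lemma pinv_char m n X : (m < n)%nat -> is_pinv m n (Am m) X ->
  forall i j, (i < n)%nat -> (j < m)%nat -> X i j = X0 m i j.
Proof. intros Hmn [Y [HY1 [_ HX]]].
  assert (HYv : forall l j, (l < m)%nat -> (j < m)%nat -> Y l j = if Nat.eqb l j then / Dd l else 0).
  { intros l j Hl Hj. specialize (HY1 l j Hl Hj). unfold mmul at 1 in HY1.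
    rewrite (rsum_ext _ _ (fun k => if Nat.eqb k l then Dd l * Y l j else 0)) in HY1.
    - rewrite rsum_delta in HY1 by lia. assert (H := Dd_pos l).
      destruct (Nat.eqb_spec l j), (Nat.eq_dec l j); try lia.
      + apply (Rmult_eq_reg_l (Dd l)); [|lra]. rewrite HY1. field. lra.
      + apply (Rmult_eq_reg_l (Dd l)); [|lra]. lra.
    - intros k Hk. rewrite AAT by lia. destruct (Nat.eqb_spec l k), (Nat.eqb_spec k l); subst; try lia; ring. }
  intros i j Hi Hj. rewrite HX by auto. unfold mmul, transp.
  rewrite (rsum_ext _ _ (fun l => if Nat.eqb l j then Am m j i / Dd j else 0)).
  + rewrite rsum_delta by lia. reflexivity.
  + intros l Hl. rewrite HYv by auto. destruct (Nat.eqb_spec l j); [subst; unfold Rdiv; ring|ring]. Qed.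

Lemma X0_inG m n : (m < n)%nat -> in_G m n (Am m) (X0 m).
Proof. intros Hmn i j Hi Hj.
  replace (mmul n (Am m) (X0 m) i j) with (/ Dd j * mmul n (Am m) (transp (Am m)) i j).
  - rewrite AAT by auto. assert (H := Dd_pos j).
    destruct (Nat.eqb_spec i j), (Nat.eq_dec i j); try lia; [subst; field; lra|ring].
  - unfold mmul. rewrite <- rsum_scal. apply rsum_ext. intros k Hk. unfold X0, transp, Rdiv. ring. Qed.

Definition W (m : nat) (k : nat) : R := (if Nat.eqb k 0%nat then 2 else 0) + (if Nat.eqb k m then -1 else 0).
Definition Z (m : nat) (t : R) : Mat := fun k j => X0 m k j + (if Nat.eqb j 0%nat then t * W m k else 0).

Lemma Z_inG m n t : (1 <= m)%nat -> (m < n)%nat -> in_G m n (Am m) (Z m t).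
Proof. intros Hm Hmn i j Hi Hj. rewrite <- (X0_inG m n Hmn i j Hi Hj). unfold mmul, Z.
  destruct (Nat.eqb_spec j 0%nat).
  - rewrite (rsum_ext _ _ (fun k => Am m i k * X0 m k j + t * ((if Nat.eqb k 0%nat then (if Nat.eqb i 0%nat then 2 else 0) else 0) + (if Nat.eqb k m then (if Nat.eqb i 0%nat then -2 else 0) else 0)))).
    + rewrite rsum_plus, rsum_scal, rsum_plus, !rsum_delta by lia. destruct (Nat.eqb i 0%nat); lra.
    + intros k Hk. unfold Am, W. cases.
  - apply rsum_ext. intros; ring. Qed.

Lemma rpow_two a b u v p k : a <> b -> 0 <= u -> 0 <= v ->
  rpow (Rabs ((if Nat.eqb k a then u else 0) + (if Nat.eqb k b then v else 0))) p =
  (if Nat.eqb k a then rpow u p else 0) + (if Nat.eqb k b then rpow v p else 0).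
Proof. intros Hab Hu Hv. destruct (Nat.eqb_spec k a), (Nat.eqb_spec k b); try lia;
  rewrite ?Rplus_0_r, ?Rplus_0_l.
  - rewrite Rabs_pos_eq; auto.
  - rewrite Rabs_pos_eq; auto.
  - rewrite Rabs_R0, rpow_0. auto. Qed.

Lemma X0col0 m k : (1 <= m)%nat -> X0 m k 0%nat = (if Nat.eqb k 0%nat then 1/5 else 0) + (if Nat.eqb k m then 2/5 else 0).
Proof. intros Hm. unfold X0, Am, Dd. cases. Qed.

Lemma Zcol0 m t k : (1 <= m)%nat -> Z m t k 0%nat = (if Nat.eqb k 0%nat then 1/5 + 2 * t else 0) + (if Nat.eqb k m then 2/5 + -1 * t else 0).
Proof. intros Hm. unfold Z, W. rewrite X0col0 by auto. simpl. cases. Qed.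

Lemma sum_two n a b u v : (a < n)%nat -> (b < n)%nat ->
  rsum n (fun k => (if Nat.eqb k a then u else 0) + (if Nat.eqb k b then v else 0)) = u + v.
Proof. intros. rewrite rsum_plus, !rsum_delta; auto. Qed.

Theorem theorem4 :
  forall m n : nat, (1 <= m)%nat -> (m < n)%nat ->
  exists A : Mat,
    full_rank m n A /\
    forall p q : R, 0 < p -> 0 < q ->
      ((forall X : Mat, is_pinv m n A X -> in_ginv_col m n p q A X) <-> p = 2).
Proof.
  intros m n Hm Hmn. exists (Am m). split; [apply full_rank_Am; auto|].
  intros p q Hp Hq. split.
  - intros H. destruct (Req_dec p 2) as [|Hne]; auto. exfalso.
    destruct (H (X0 m) (X0_pinv m n Hmn)) as [_ Hmin].
    destruct (deriv_exists p Hp Hne) as [t [Ht Hlt]].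
    specialize (Hmin (Z m t) (Z_inG m n t Hm Hmn)).
    assert (colnorm n m p q (Z m t) < colnorm n m p q (X0 m)); [|lra].
    assert (Hs : rsum n (fun i => rpow (Rabs (Z m t i 0%nat)) p) < rsum n (fun i => rpow (Rabs (X0 m i 0%nat)) p)).
    { rewrite (rsum_ext _ _ (fun k => (if Nat.eqb k 0%nat then rpow (1/5 + 2 * t) p else 0) + (if Nat.eqb k m then rpow (2/5 + -1 * t) p else 0))).
      2:{ intros k Hk. rewrite Zcol0, rpow_two by (auto; lra || lia). auto. }
      rewrite (rsum_ext n (fun i => rpow (Rabs (X0 m i 0%nat)) p) (fun k => (if Nat.eqb k 0%nat then rpow (1/5) p else 0) + (if Nat.eqb k m then rpow (2/5) p else 0))).
      2:{ intros k Hk. rewrite X0col0, rpow_two by (auto; lra || lia). auto. }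
      rewrite !sum_two by lia. rewrite !rpow_pos by lra. auto. }
    apply (colnorm_lt _ _ _ _ _ _ 0); auto; try lia.
    intros j Hj. destruct (Nat.eqb_spec j 0%nat); [subst; left; auto|right].
    apply rsum_ext. intros k Hk. unfold Z.
    destruct (Nat.eqb_spec j 0%nat); [lia|rewrite Rplus_0_r; auto].
  - intros Hp2 X HX. subst p. assert (Xeq := pinv_char m n X Hmn HX). split.
    + apply (in_G_ext m n _ (X0 m)); [intros; symmetry; auto|apply X0_inG; auto].
    + intros Y HY. rewrite (colnorm_ext _ _ _ _ X (X0 m)) by auto.
      apply colnorm_le; auto. intros j Hj.
      rewrite (rsum_ext _ _ (fun i => X0 m i j * X0 m i j)) by (intros; apply rpow_sq).
      rewrite (rsum_ext n (fun i => rpow (Rabs (Y i j)) 2) (fun i => Y i j * Y i j)) by (intros; apply rpow_sq).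
      destruct (Nat.eqb_spec j 0%nat).
      * subst j.
        rewrite (rsum_ext _ _ (fun k => (if Nat.eqb k 0%nat then 1/25 else 0) + (if Nat.eqb k m then 4/25 else 0))).
        2:{ intros k Hk. rewrite X0col0 by auto. cases. }
        rewrite sum_two by lia.
        assert (HY0 := HY 0%nat 0%nat ltac:(lia) ltac:(lia)). unfold mmul in HY0.
        rewrite (rsum_ext _ _ (fun k => (if Nat.eqb k 0%nat then Y 0%nat 0%nat else 0) + (if Nat.eqb k m then 2 * Y m 0%nat else 0))) in HY0.
        2:{ intros k Hk. unfold Am. cases. }
        rewrite sum_two in HY0 by lia. destruct (Nat.eq_dec 0 0) as [_|]; [|lia].
        pose proof (Rle_0_sqr (2 * Y 0%nat 0%nat - Y m 0%nat)). unfold Rsqr in *.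
        apply Rle_trans with (rsum n (fun k => (if Nat.eqb k 0%nat then Y 0%nat 0%nat * Y 0%nat 0%nat else 0) + (if Nat.eqb k m then Y m 0%nat * Y m 0%nat else 0))).
        -- rewrite sum_two by lia. nra.
        -- apply rsum_le. intros k Hk. cases.
      * rewrite (rsum_ext _ _ (fun k => if Nat.eqb k j then 1 else 0)).
        2:{ intros k Hk. unfold X0, Am, Dd. cases. }
        rewrite rsum_delta by lia.
        assert (HYj := HY j j Hj Hj). unfold mmul in HYj.
        rewrite (rsum_ext _ _ (fun k => if Nat.eqb k j then Y j j else 0)) in HYj.
        2:{ intros k Hk. unfold Am. cases. }
        rewrite rsum_delta in HYj by lia. destruct (Nat.eq_dec j j); [|lia].
        apply Rle_trans with (rsum n (fun k => if Nat.eqb k j then Y j j * Y j j else 0)).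
        -- rewrite rsum_delta by lia. nra.
        -- apply rsum_le. intros k Hk. cases.
Qed.
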